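(* Let $A,B$ be interior algebras. Then $\{\mathcal{O}(h): h\in\mathrm{hom}(A,B)\}=\mathrm{hom}(\mathcal{O}(A),\mathcal{O}(B))$ if and only if every interior algebra homomorphism $h\colon A^*\to B^*$ has an extension to a homomorphism $A\to B$.
   Context: An interior algebra $\langle B,g\rangle$ is a Boolean algebra with an operator $g$ satisfying $g(1)=1$, $g(xy)=g(x)g(y)$, $g(x)\le x$, $gg(x)=g(x)$; $a$ is open if $g(a)=a$. $\mathcal{O}(B)=B^\circ$ is the Heyting algebra of open elements with $a\Rightarrow b=g(-a+b)$, and $\mathcal{O}(h)$ is the restriction of a homomorphism $h$ to open elements. $\mathrm{hom}(\mathcal{O}(A),\mathcal{O}(B))$ is the set of Heyting algebra homomorphisms. $A^*$ is the subalgebra of $A$ generated by its open elements. *)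

(* Defs.v *)
(* A Boolean algebra is a complemented distributive lattice
   with top and bottom: mathcomp's [ctbDistrLatticeType]. *)
From HB Require Import structures.
From mathcomp Require Import all_boot all_order.
Set Implicit Arguments. Unset Strict Implicit. Unset Printing Implicit Defensive.
Import Order.Theory.
Local Open Scope order_scope.

Section Interior.
Variables (d : Order.disp_t) (B : ctbDistrLatticeType d).

Definition interior_op (g : B -> B) : Prop :=
  ((g \top = \top) /\
      (forall x y, g (x `&` y) = g x `&` g y) /\
      (forall x, g x <= x) /\
      (forall x, g (g x) = g x)).

Definition is_open (g : B -> B) (a : B) : Prop := g a = a.

Definition himpl (g : B -> B) (a b : B) : B := g (~` a `|` b).

Inductive in_star (g : B -> B) : B -> Prop :=
  | star_open a : is_open g a -> in_star g a
  | star_bot : in_star g \bot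
  | star_top : in_star g \top
  | star_meet a b : in_star g a -> in_star g b -> in_star g (a `&` b)
  | star_join a b : in_star g a -> in_star g b -> in_star g (a `|` b)
  | star_compl a : in_star g a -> in_star g (~` a).
End Interior.

Section Homs.
Variables (dA dB : Order.disp_t)
  (A : ctbDistrLatticeType dA) (B : ctbDistrLatticeType dB)
  (gA : A -> A) (gB : B -> B).

Definition int_hom (h : A -> B) : Prop :=
  ((h \bot = \bot) /\
      (h \top = \top) /\
      (forall x y, h (x `&` y) = h x `&` h y) /\
      (forall x y, h (x `|` y) = h x `|` h y) /\
      (forall x, h (~` x) = ~` h x) /\
      (forall x, h (gA x) = gB (h x))).

(* h, considered only on O(A), is a Heyting algebra homomorphism O(A) -> O(B)
   (its values outside O(A) are irrelevant) *)
Definition heyting_hom_on_opens (h : A -> B) : Prop :=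
  ((forall a, is_open gA a -> is_open gB (h a)) /\
      (h \bot = \bot) /\
      (h \top = \top) /\
      (forall a b, is_open gA a -> is_open gA b -> h (a `&` b) = h a `&` h b) /\
      (forall a b, is_open gA a -> is_open gA b -> h (a `|` b) = h a `|` h b) /\
      (forall a b, is_open gA a -> is_open gA b ->
         h (himpl gA a b) = himpl gB (h a) (h b))).

(* h, considered only on A^*, is an interior algebra homomorphism A^* -> B^*
   (its values outside A^* are irrelevant) *)
Definition int_hom_on_star (h : A -> B) : Prop :=
  ((forall a, in_star gA a -> in_star gB (h a)) /\
      (h \bot = \bot) /\
      (h \top = \top) /\
      (forall a b, in_star gA a -> in_star gA b -> h (a `&` b) = h a `&` h b) /\
      (forall a b, in_star gA a -> in_star gA b -> h (a `|` b) = h a `|` h b) /\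
      (forall a, in_star gA a -> h (~` a) = ~` h a) /\
      (forall a, in_star gA a -> h (gA a) = gB (h a))).

(* { O(h) : h in hom(A,B) } = hom(O(A), O(B)), as an equality of sets of
   maps O(A) -> O(B); two such maps are equal iff they agree on all opens. *)
Definition restrictions_are_all_heyting_homs : Prop :=
  (forall h, int_hom h -> heyting_hom_on_opens h) /\
  (forall k, heyting_hom_on_opens k ->
     exists h, int_hom h /\ forall a, is_open gA a -> h a = k a).

Definition star_homs_extend : Prop :=
  forall k, int_hom_on_star k ->
    exists h, int_hom h /\ forall a, in_star gA a -> h a = k a.
End Homs.

(* Main.v *)
Require Import Defs.
From mathcomp Require Import all_boot all_order.
From Stdlib Require Import ClassicalEpsilon.
Set Implicit Arguments. Unset Strict Implicit. Unset Printing Implicit Defensive.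
Import Order.Theory.
Local Open Scope order_scope.

Section Gen.
Variables (d : Order.disp_t) (L : ctbDistrLatticeType d).
Implicit Types (x y u v a b : L) (l : seq (L * L)).

Definition cnf l : L := foldr (fun p acc => (~` p.1 `|` p.2) `&` acc) \top l.

Definition pj (p q : L * L) : L * L := (p.1 `&` q.1, p.2 `|` q.2).

Fixpoint prodc l1 l2 : seq (L * L) :=
  match l1 with [::] => [::] | p :: l1' => map (pj p) l2 ++ prodc l1' l2 end.

Definition neg l : seq (L * L) :=
  foldr (fun p acc => prodc [:: (\top, p.1); (p.2, \bot)] acc) [:: (\top, \bot)] l.

Lemma neg_cons p l : neg (p :: l) = prodc [:: (\top, p.1); (p.2, \bot)] (neg l).
Proof. by []. Qed.

Lemma cnf_cat l1 l2 : cnf (l1 ++ l2) = cnf l1 `&` cnf l2.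
Proof. elim: l1 => [|p l1 IH] /=; first by rewrite meet1x. by rewrite IH meetA. Qed.

Lemma cnf_map_pj p l : cnf (map (pj p) l) = (~` p.1 `|` p.2) `|` cnf l.
Proof.
elim: l => [|q l IH] /=; first by rewrite joinx1.
rewrite IH joinIr /pj /=; congr (_ `&` _).
by rewrite complI -!joinA; congr (_ `|` _); rewrite joinCA.
Qed.

Lemma cnf_prodc l1 l2 : cnf (prodc l1 l2) = cnf l1 `|` cnf l2.
Proof.
elim: l1 => [|p l1 IH] /=; first by rewrite join1x.
by rewrite cnf_cat cnf_map_pj IH joinIl.
Qed.

Lemma cnf_neg l : cnf (neg l) = ~` cnf l.
Proof.
elim: l => [|p l IH]; first by rewrite /= compl1 joinx0 meetx1.
rewrite neg_cons cnf_prodc IH /= compl1 join0x joinx0 meetx1 complI complU complK.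
by [].
Qed.

Lemma key_le x a v : (x `&` ~` a <= v) = (x <= v `|` a).
Proof.
apply/idP/idP => H.
  rewrite -[x](joinIB a) joinC; apply: leU2; last exact: leIr.
  by rewrite diffE.
apply: le_trans (leI2 H (lexx (~` a))) _.
by rewrite meetUl meetxC joinx0 leIl.
Qed.

Lemma key_le2 y c e : (y <= ~` c `|` e) = (c `&` y <= e).
Proof. by rewrite joinC -key_le complK meetC. Qed.

Lemma split_le u a b X v : (u `&` ((~` a `|` b) `&` X) <= v) =
  ((u `&` X) `&` ~` a <= v) && ((u `&` b) `&` X <= v).
Proof.
rewrite meetCA meetUl leUx; congr (_ && _); first by rewrite meetC.
by rewrite meetCA meetA.
Qed.

Variable g : L -> L.
Hypothesis hg : interior_op g.

Lemma g_mono x y : x <= y -> g x <= g y.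
Proof.
move=> /meet_idPl <-; case: hg => _ [-> _]; exact: leIr.
Qed.

Lemma open_top : is_open g \top. Proof. by case: hg. Qed.
Lemma open_bot : is_open g \bot.
Proof. apply/eqP; rewrite -lex0; by case: hg => _ [_ [-> _]]. Qed.
Lemma open_meet a b : is_open g a -> is_open g b -> is_open g (a `&` b).
Proof. rewrite /is_open => Ha Hb; case: hg => _ [-> _]; by rewrite Ha Hb. Qed.
Lemma open_join a b : is_open g a -> is_open g b -> is_open g (a `|` b).
Proof.
rewrite /is_open => Ha Hb; apply/eqP; rewrite eq_le.
case: hg => _ [_ [-> _]] /=.
by rewrite -{1}Ha -{1}Hb leUx !g_mono // ?leUl ?leUr.
Qed.
Lemma open_g x : is_open g (g x).
Proof. by rewrite /is_open; case: hg => _ [_ [_ ->]]. Qed.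

Fixpoint all_open l : Prop :=
  match l with [::] => True | p :: l' => is_open g p.1 /\ is_open g p.2 /\ all_open l' end.

Lemma all_open_cat l1 l2 : all_open l1 -> all_open l2 -> all_open (l1 ++ l2).
Proof. by elim: l1 => [|p l1 IH] //= [? [? ?]] ?; split=> //; split=> //; apply: IH. Qed.

Lemma all_open_map_pj p l : is_open g p.1 -> is_open g p.2 -> all_open l ->
  all_open (map (pj p) l).
Proof.
move=> h1 h2; elim: l => [|q l IH] //= [? [? ?]]; split; first exact: open_meet.
split; [exact: open_join | exact: IH].
Qed.

Lemma all_open_prodc l1 l2 : all_open l1 -> all_open l2 -> all_open (prodc l1 l2).
Proof.
elim: l1 => [|p l1 IH] //= [? [? ?]] ?; apply: all_open_cat; last exact: IH.
exact: all_open_map_pj.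
Qed.

Lemma all_open_neg l : all_open l -> all_open (neg l).
Proof.
elim: l => [|p l IH]; first by move=> _; split; [exact: open_top|split; [exact: open_bot|]].
rewrite neg_cons => -[? [? ?]]; apply: all_open_prodc; last exact: IH.
by split; [exact: open_top|split=>//; split=>//; split=>//; exact: open_bot].
Qed.

Definition gl l : seq (L * L) := map (fun p => (\top, g (~` p.1 `|` p.2))) l.

Lemma all_open_gl l : all_open (gl l).
Proof. elim: l => [|p l IH] //=; split; [exact: open_top| split; [exact: open_g|exact: IH]]. Qed.

Lemma cnf_gl l : cnf (gl l) = g (cnf l).
Proof.
elim: l => [|p l IH] /=; first by rewrite open_top.
by rewrite IH compl1 join0x; case: hg => _ [-> _].
Qed.

Lemma star_cnf x : in_star g x -> exists l, all_open l /\ cnf l = x.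
Proof.
elim.
- move=> a Ha; exists [:: (\top, a)] => /=; split.
    by split; [exact: open_top|split].
  by rewrite compl1 join0x meetx1.
- exists [:: (\top, \bot)]; split; first by split; [exact: open_top|split; [exact: open_bot|]].
  by rewrite /= compl1 joinx0 meetx1.
- by exists [::].
- move=> a b _ [l1 [o1 e1]] _ [l2 [o2 e2]]; exists (l1 ++ l2); split.
    exact: all_open_cat.
  by rewrite cnf_cat e1 e2.
- move=> a b _ [l1 [o1 e1]] _ [l2 [o2 e2]]; exists (prodc l1 l2); split.
    exact: all_open_prodc.
  by rewrite cnf_prodc e1 e2.
- move=> a _ [l [o e]]; exists (neg l); split; first exact: all_open_neg.
  by rewrite cnf_neg e.
Qed.

Lemma cnf_star l : all_open l -> in_star g (cnf l).
Proof.
elim: l => [|p l IH] /=; first by move=> _; exact: star_top.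
move=> [h1 [h2 h3]]; apply: star_meet; last exact: IH.
apply: star_join; [apply: star_compl; exact: star_open | exact: star_open].
Qed.

End Gen.

Section Cross.
Variables (dA dB : Order.disp_t)
  (A : ctbDistrLatticeType dA) (B : ctbDistrLatticeType dB)
  (gA : A -> A) (gB : B -> B)
  (hgA : interior_op gA) (hgB : interior_op gB).
Variable k : A -> B.
Hypothesis hk : heyting_hom_on_opens gA gB k.

Definition kmap (l : seq (A * A)) : seq (B * B) := map (fun p => (k p.1, k p.2)) l.

Lemma kopen a : is_open gA a -> is_open gB (k a). Proof. by case: hk => H _; apply: H. Qed.
Lemma kbot : k \bot = \bot. Proof. by case: hk => _ []. Qed.
Lemma ktop : k \top = \top. Proof. by case: hk => _ [_ []]. Qed.
Lemma kmeet a b : is_open gA a -> is_open gA b -> k (a `&` b) = k a `&` k b.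
Proof. by case: hk => _ [_ [_ [H _]]]; apply: H. Qed.
Lemma kjoin a b : is_open gA a -> is_open gA b -> k (a `|` b) = k a `|` k b.
Proof. by case: hk => _ [_ [_ [_ [H _]]]]; apply: H. Qed.
Lemma kimpl a b : is_open gA a -> is_open gA b -> k (himpl gA a b) = himpl gB (k a) (k b).
Proof. by case: hk => _ [_ [_ [_ [_ H]]]]; apply: H. Qed.

Lemma kmono a b : is_open gA a -> is_open gA b -> a <= b -> k a <= k b.
Proof. by move=> ha hb /meet_idPl <-; rewrite kmeet // leIr. Qed.

Lemma all_open_kmap l : all_open gA l -> all_open gB (kmap l).
Proof.
elim: l => [|p l IH] //= [? [? ?]]; split; first exact: kopen.
split; [exact: kopen|exact: IH].
Qed.

Lemma kmap_cat l1 l2 : kmap (l1 ++ l2) = kmap l1 ++ kmap l2.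
Proof. exact: map_cat. Qed.

Lemma kmap_prodc l1 l2 : all_open gA l1 -> all_open gA l2 ->
  kmap (prodc l1 l2) = prodc (kmap l1) (kmap l2).
Proof.
elim: l1 => [|p l1 IH] //= [h1 [h2 h3]] o2.
rewrite kmap_cat IH //; congr (_ ++ _); clear IH.
elim: l2 o2 => [|q l2 IH2] //= [q1 [q2 q3]].
by rewrite IH2 // /pj /= kmeet // kjoin.
Qed.

Lemma kmap_neg l : all_open gA l -> kmap (neg l) = neg (kmap l).
Proof.
elim: l => [|p l IH]; first by rewrite /kmap /= ktop kbot.
move=> [h1 [h2 h3]]; rewrite neg_cons [neg (kmap _)]/= -/(neg (kmap l)).
rewrite kmap_prodc //; last exact: all_open_neg.
  by rewrite IH // /kmap /= ktop kbot.
by split; [exact: open_top|split=>//; split=>//; split=>//; exact: open_bot].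
Qed.

Lemma kmap_gl l : all_open gA l -> kmap (gl gA l) = gl gB (kmap l).
Proof.
elim: l => [|p l IH] //= [h1 [h2 h3]].
rewrite /kmap /= in IH *; rewrite IH // ktop.
by have := kimpl h1 h2; rewrite /himpl => ->.
Qed.

Lemma kcnf_le l : all_open gA l -> forall u v, is_open gA u -> is_open gA v ->
  u `&` cnf l <= v -> k u `&` cnf (kmap l) <= k v.
Proof.
elim: l => [|p l IH] /=.
  by move=> _ u v hu hv; rewrite !meetx1; exact: kmono.
move=> [h1 [h2 h3]] u v hu hv.
rewrite split_le => /andP [H1 H2].
rewrite split_le; apply/andP; split.
  rewrite key_le -kjoin //; apply: IH => //; first exact: open_join.
  by rewrite -key_le.
rewrite -kmeet //; apply: IH => //; exact: open_meet.
Qed.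

Lemma kcnf_mono l1 l2 : all_open gA l1 -> all_open gA l2 ->
  cnf l1 <= cnf l2 -> cnf (kmap l1) <= cnf (kmap l2).
Proof.
move=> o1; elim: l2 => [|q l2 IH] /=; first by rewrite lex1.
move=> [q1 [q2 q3]]; rewrite !lexI => /andP [H1 H2]; apply/andP; split; last exact: IH.
rewrite key_le2; move: H1; rewrite key_le2 => H1.
have := kcnf_le o1 q1 q2 H1; by [].
Qed.

Lemma kcnf_eq l1 l2 : all_open gA l1 -> all_open gA l2 ->
  cnf l1 = cnf l2 -> cnf (kmap l1) = cnf (kmap l2).
Proof.
move=> o1 o2 e; apply/eqP; rewrite eq_le; apply/andP; split;
  apply: kcnf_mono => //; by rewrite e.
Qed.

Definition kext (x : A) : B :=
  match excluded_middle_informative (exists l, all_open gA l /\ cnf l = x) with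
  | left H => cnf (kmap (proj1_sig (constructive_indefinite_description _ H)))
  | right _ => \bot
  end.

Lemma kext_eq l x : all_open gA l -> cnf l = x -> kext x = cnf (kmap l).
Proof.
move=> o e; rewrite /kext; case: excluded_middle_informative => [H|H]; last first.
  by exfalso; apply: H; exists l.
case: constructive_indefinite_description => l' /= [o' e'].
by apply: kcnf_eq => //; rewrite e e'.
Qed.

Lemma kext_star : int_hom_on_star gA gB kext.
Proof.
have cs := star_cnf hgA.
split.
  move=> a /cs [l [o e]]; rewrite (kext_eq o e); apply: cnf_star.
  exact: all_open_kmap.
split.
  have o : all_open gA [:: (\top, \bot)].
    by split; [exact: open_top|split; [exact: open_bot|]].
  rewrite (kext_eq (l := [:: (\top, \bot)])) //=; last by rewrite compl1 joinx0 meetx1.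
  by rewrite ktop kbot compl1 joinx0 meetx1.
split; first by rewrite (kext_eq (l := [::])).
split.
  move=> a b /cs [l1 [o1 e1]] /cs [l2 [o2 e2]].
  rewrite (kext_eq o1 e1) (kext_eq o2 e2) (kext_eq (l := l1 ++ l2)).
  - by rewrite kmap_cat cnf_cat.
  - exact: all_open_cat.
  - by rewrite cnf_cat e1 e2.
split.
  move=> a b /cs [l1 [o1 e1]] /cs [l2 [o2 e2]].
  rewrite (kext_eq o1 e1) (kext_eq o2 e2) (kext_eq (l := prodc l1 l2)).
  - by rewrite kmap_prodc // cnf_prodc.
  - exact: all_open_prodc.
  - by rewrite cnf_prodc e1 e2.
split.
  move=> a /cs [l [o e]].
  rewrite (kext_eq o e) (kext_eq (l := neg l)).
  - by rewrite kmap_neg // cnf_neg.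
  - exact: all_open_neg.
  - by rewrite cnf_neg e.
move=> a /cs [l [o e]].
rewrite (kext_eq o e) (kext_eq (l := gl gA l)).
- by rewrite kmap_gl // cnf_gl.
- exact: all_open_gl.
- by rewrite cnf_gl // e.
Qed.

Lemma kext_open a : is_open gA a -> kext a = k a.
Proof.
move=> ha; rewrite (kext_eq (l := [:: (\top, a)])) /=.
- by rewrite ktop compl1 join0x meetx1.
- by split; [exact: open_top|split].
- by rewrite compl1 join0x meetx1.
Qed.

End Cross.

Theorem lemma5p10 (dA dB : Order.disp_t)
  (A : ctbDistrLatticeType dA) (B : ctbDistrLatticeType dB)
  (gA : A -> A) (gB : B -> B)
  (hgA : interior_op gA) (hgB : interior_op gB) :
  restrictions_are_all_heyting_homs gA gB <-> star_homs_extend gA gB.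
Proof.
split.
  move=> [R1 R2] k [kS [k0 [k1 [kI [kU [kC kG]]]]]].
  have sO : forall a, is_open gA a -> in_star gA a by move=> a; exact: star_open.
  have hk : heyting_hom_on_opens gA gB k.
    split.
      move=> a ha; rewrite /is_open -kG; [by rewrite ha | exact: sO].
    do 2 (split => //).
    split; first by move=> a b ha hb; apply: kI; apply: sO.
    split; first by move=> a b ha hb; apply: kU; apply: sO.
    move=> a b ha hb; rewrite /himpl kG; last first.
      by apply: star_join; [apply: star_compl|]; apply: sO.
    have sa := sO a ha; have sb := sO b hb.
    by rewrite kU ?kC //; apply: star_compl.
  have [h [[h0 [h1 [hI [hU [hC hG]]]]] hE]] := R2 k hk.
  exists h; split; first by split=> //; split=> //; split=> //; split=> //; split.
  move=> a; elim.
  - by move=> x hx; apply: hE.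
  - by rewrite h0 k0.
  - by rewrite h1 k1.
  - by move=> x y sx ex sy ey; rewrite hI kI // ex ey.
  - by move=> x y sx ex sy ey; rewrite hU kU // ex ey.
  - by move=> x sx ex; rewrite hC kC // ex.
move=> E; split.
  move=> h [h0 [h1 [hI [hU [hC hG]]]]]; split.
    by move=> a ha; rewrite /is_open -hG ha.
  do 2 (split => //).
  split; first by move=> a b _ _; apply: hI.
  split; first by move=> a b _ _; apply: hU.
  by move=> a b _ _; rewrite /himpl hG hU hC.
move=> k hk.
have [h [hh hE]] := E _ (@kext_star _ _ _ _ gA gB hgA hgB k hk).
exists h; split => // a ha.
rewrite hE; [exact: (kext_open hgA hk ha) | exact: star_open].
Qed.
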